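(* For every integer $n\ge1$, the monomials $u^iv^jw^{n-i-j}$ occurring with nonzero coefficient in $P_{1/n}(u,v,w)$ are exactly those with $(i,j)\in\mathbb{Z}^2$, $i,j\ge0$, $i+\frac{j}{n}\ge1$ and $i+j\le n$.
   Context: Markov polynomials. Let $x,y,z$ be indeterminates. Consider the set consisting of all rationals $\rho\in[0,1]$, each written in lowest terms $\rho=a/b$ with integers $a\ge 0$, $b\ge 1$, together with the formal symbol $1/0$. Define Laurent polynomials $M_\rho(x,y,z)$ recursively by $M_{1/0}=y$, $M_{0/1}=x$, $M_{1/1}=\frac{x^2+y^2}{z}$, and: whenever $a/b$, $c/d$ are in this set with $|ad-bc|=1$ and $(a+2c)/(b+2d)\in[0,1]$, then $M_{\frac{a+2c}{b+2d}}=\big(M_{c/d}^2+M_{\frac{a+c}{b+d}}^2\big)/M_{a/b}$. This determines $M_\rho$ for every rational $\rho\in[0,1]$. Numerator. For coprime $1\le a\le b$, $P_{a/b}(u,v,w)$ denotes the homogeneous polynomial of degree $a+b-1$ such that $M_{a/b}(x,y,z)=P_{a/b}(x^2,y^2,z^2)/(x^{a-1}y^{b-1}z^{a+b-1})$; its existence is known. *)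

(* Defs.v *)
From HB Require Import structures.
From mathcomp Require Import all_boot all_order all_algebra.
From mathcomp Require Import fraction.
From mathcomp Require Export mpoly.
Set Implicit Arguments. Unset Strict Implicit. Unset Printing Implicit Defensive.
Import Order.TTheory GRing.Theory Num.Theory.
Local Open Scope ring_scope.

Definition Pol3 := {mpoly rat[3]}.
(* Field of rational functions Q(x,y,z); Laurent polynomials live in it. *)
Definition RF := {fraction Pol3}.

Definition i0 : 'I_3 := @Ordinal 3 0 isT.
Definition i1 : 'I_3 := @Ordinal 3 1 isT.
Definition i2 : 'I_3 := @Ordinal 3 2 isT.

Definition toRF (p : Pol3) : RF := @FracField.tofrac _ p.

Definition xF : RF := toRF 'X_i0.
Definition yF : RF := toRF 'X_i1.
Definition zF : RF := toRF 'X_i2.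

(* Index set: a/b in lowest terms with 0 <= a <= b, b >= 1, or the formal 1/0. *)
Definition valid_idx (a b : nat) : bool :=
  ((0 < b)%N && (a <= b)%N && coprime a b) || ((a == 1%N) && (b == 0%N)).

(* M : nat -> nat -> RF, M a b standing for M_{a/b}, satisfies the defining
   relations of the Markov polynomials. *)
Definition is_markov_family (M : nat -> nat -> RF) : Prop :=
  [/\ M 1%N 0%N = yF, M 0%N 1%N = xF,
      M 1%N 1%N = (xF ^+ 2 + yF ^+ 2) / zF &
      forall a b c d : nat,
        valid_idx a b -> valid_idx c d ->
        `|(a * d)%:Z - (b * c)%:Z| = 1 ->
        (a + 2 * c <= b + 2 * d)%N ->
        M (a + 2 * c)%N (b + 2 * d)%N
          = (M c d ^+ 2 + M (a + c)%N (b + d)%N ^+ 2) / M a b].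

Definition sq_subst (P : Pol3) : Pol3 :=
  P \mPo [tuple ('X_i0 : Pol3) ^+ 2; ('X_i1 : Pol3) ^+ 2; ('X_i2 : Pol3) ^+ 2].

Definition mono3 (i j k : nat) : 'X_{1..3} := [multinom of [:: i; j; k]].

(* Main.v *)
Require Import Defs.
From HB Require Import structures.
From mathcomp Require Import all_boot all_order all_algebra.
From mathcomp Require Import fraction.
From mathcomp Require Import mpoly.
From mathcomp Require Import ring zify.
Import Order.TTheory GRing.Theory Num.Theory.
Local Open Scope ring_scope.

Definition U : Pol3 := 'X_i0.
Definition V : Pol3 := 'X_i1.
Definition W : Pol3 := 'X_i2.

Fixpoint PD (k : nat) : Pol3 * Pol3 :=
  match k with
  | 0 => (1, 0)
  | k'.+1 => let pd := PD k' in ((U + V) * pd.1 + W * pd.2, U * pd.1 + W * pd.2)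
  end.
Definition Pk k := (PD k).1.
Definition Dk k := (PD k).2.

Lemma PkS k : Pk k.+1 = (U + V) * Pk k + W * Dk k. Proof. by []. Qed.
Lemma DkS k : Dk k.+1 = U * Pk k + W * Dk k. Proof. by []. Qed.
Lemma Pk0 : Pk 0 = 1. Proof. by []. Qed.
Lemma Dk0 : Dk 0 = 0. Proof. by []. Qed.

Lemma Pk_rec k : Pk k.+2 = (U + V + W) * Pk k.+1 - V * W * Pk k.
Proof. rewrite !PkS DkS. ring. Qed.

Lemma cassini k : Pk k.+2 * Pk k = Pk k.+1 ^+ 2 + U * V ^+ k * W ^+ k.+1.
Proof.
elim: k => [|k IH].
  rewrite !PkS DkS Pk0 Dk0 /=. ring.
rewrite (Pk_rec k.+1) !(Pk_rec k) in IH *.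
set P0 := Pk k in IH *; set P1 := Pk k.+1 in IH *.
apply/eqP; rewrite -subr_eq0.
have -> : ((U + V + W) * ((U + V + W) * P1 - V * W * P0) - V * W * P1) * P1 -
  (((U + V + W) * P1 - V * W * P0) ^+ 2 + U * V ^+ k.+1 * W ^+ k.+2) =
  V * W * (((U + V + W) * P1 - V * W * P0) * P0 - (P1 ^+ 2 + U * V ^+ k * W ^+ k.+1)).
  rewrite !exprS; ring.
by rewrite IH subrr mulr0.
Qed.


Lemma coefX (i : 'I_3) (p : Pol3) m :
  (('X_i : Pol3) * p)@_m = if (m i != 0)%N then p@_(m - U_(i)) else 0.
Proof.
rewrite mulrC; case: ifP => h.
  rewrite {1}(_ : m = (U_(i) + (m - U_(i)))%MM); first exact: mcoeffMX.
  by rewrite addmC submK // lep1mP.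
apply/eqP; rewrite -[_ == 0]negbK -mcoeff_msupp (perm_mem (msuppMX p U_(i))).
apply/negP => /mapP [m' _ e]; move: h; by rewrite e mnmDE mnm1E eqxx.
Qed.

Definition tup : 3.-tuple Pol3 :=
  [tuple ('X_i0 : Pol3) ^+ 2; ('X_i1 : Pol3) ^+ 2; ('X_i2 : Pol3) ^+ 2].

Lemma sqX (m : 'X_{1..3}) : 'X_[m] \mPo tup = 'X_[m *+ 2].
Proof.
rewrite comp_mpolyX [RHS]mpolyXE_id; apply: eq_bigr => i _.
rewrite mulmnE mulnC exprM; congr (_ ^+ _).
by case: i => [[|[|[|]]]] // Hi; rewrite /tup /=; congr (_ ^+ 2); apply/val_inj.
Qed.

Lemma sq_coef (P : Pol3) m : (sq_subst P)@_(m *+ 2) = P@_m.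
Proof.
rewrite /sq_subst -/tup comp_mpolyEX. rewrite (raddf_sum (mcoeff (m *+ 2))) [P in RHS]mpolyE (raddf_sum (mcoeff m)) /=.
apply: eq_bigr => m' _; rewrite sqX !mcoeffZ !mcoeffX; congr (_ * _%:R).
congr (nat_of_bool _). apply/idP/idP => [/eqP/mnmP e|/eqP -> //]; apply/eqP/mnmP => i.
by move: (e i); rewrite !mulmnE; lia.
Qed.

Lemma e01 : (i0 == i1) = false. Proof. by []. Qed.
Lemma e02 : (i0 == i2) = false. Proof. by []. Qed.
Lemma e10 : (i1 == i0) = false. Proof. by []. Qed.
Lemma e12 : (i1 == i2) = false. Proof. by []. Qed.
Lemma e20 : (i2 == i0) = false. Proof. by []. Qed.
Lemma e21 : (i2 == i1) = false. Proof. by []. Qed.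

Lemma mnm3E (m1 m2 : 'X_{1..3}) :
  (m1 == m2) = [&& m1 i0 == m2 i0, m1 i1 == m2 i1 & m1 i2 == m2 i2].
Proof.
apply/eqP/and3P => [->|[/eqP a /eqP b /eqP c]]; first by rewrite !eqxx.
apply/mnmP => -[[|[|[|//]]] Hi].
- by rewrite (_ : Ordinal Hi = i0) //; apply/val_inj.
- by rewrite (_ : Ordinal Hi = i1) //; apply/val_inj.
- by rewrite (_ : Ordinal Hi = i2) //; apply/val_inj.
Qed.

Definition tgt k (m : 'X_{1..3}) :=
  ((m i0 + m i1 + m i2 == k) && ((m i0 != 0) || (m i1 == k)))%N.
Definition dtgt k (m : 'X_{1..3}) :=
  ((m i0 + m i1 + m i2 == k) && (m i0 != 0))%N.

Lemma ifnn (c : bool) (x : rat) : 0 <= x -> 0 <= (if c then x else 0).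
Proof. by case: c. Qed.
Lemma ifne (c : bool) (x : rat) : ((if c then x else 0) != 0) = c && (x != 0).
Proof. by case: c; rewrite ?eqxx. Qed.
Lemma ge0D {a b : rat} : 0 <= a -> 0 <= b -> 0 <= a + b.
Proof. exact: addr_ge0. Qed.
Lemma add2 {a b : rat} : 0 <= a -> 0 <= b -> (a + b != 0) = (a != 0) || (b != 0).
Proof. by move=> ha hb; rewrite paddr_eq0 // negb_and. Qed.

Lemma ar1 (a b c k : nat) : (([&& a != 0, (a - 1 + (b - 0) + (c - 0)) == k
    & ((a - 1) != 0) || ((b - 0) == k)]
  || [&& b != 0, (a - 0 + (b - 1) + (c - 0)) == k
       & ((a - 0) != 0) || ((b - 1) == k)]
  || [&& c != 0, (a - 0 + (b - 0) + (c - 1)) == k & (a - 0) != 0]) =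
  ((a + b + c) == k.+1) && ((a != 0) || (b == k.+1)))%N.
Proof. lia. Qed.
Lemma ar2 (a b c k : nat) : ([&& a != 0, (a - 1 + (b - 0) + (c - 0)) == k
    & ((a - 1) != 0) || ((b - 0) == k)]
  || [&& c != 0, (a - 0 + (b - 0) + (c - 1)) == k & (a - 0) != 0] =
  ((a + b + c) == k.+1) && (a != 0))%N.
Proof. lia. Qed.

Lemma supp k m :
  [/\ 0 <= (Pk k)@_m, 0 <= (Dk k)@_m,
      ((Pk k)@_m != 0) = tgt k m & ((Dk k)@_m != 0) = dtgt k m].
Proof.
elim: k m => [|k IH] m.
  rewrite Pk0 Dk0 mcoeff1 mcoeff0 eqxx ler0n lexx pnatr_eq0 mnm3E.
  rewrite /tgt /dtgt !mnm0E; move: (m i0) (m i1) (m i2) => a b c.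
  split => //; case: a; case: b; case: c => //= *; lia.
have [p0 d0 ep0 ed0] := IH (m - U_(i0))%MM.
have [p1 d1 ep1 ed1] := IH (m - U_(i1))%MM.
have [p2 d2 ep2 ed2] := IH (m - U_(i2))%MM.
rewrite PkS DkS mulrDl !mcoeffD /U /V /W !coefX.
split.
- exact: (ge0D (ge0D (ifnn _ _ p0) (ifnn _ _ p1)) (ifnn _ _ d2)).
- exact: (ge0D (ifnn _ _ p0) (ifnn _ _ d2)).
- rewrite (add2 (ge0D (ifnn _ _ p0) (ifnn _ _ p1)) (ifnn _ _ d2)).
  rewrite (add2 (ifnn _ _ p0) (ifnn _ _ p1)) !ifne ep0 ep1 ed2.
  rewrite /tgt /dtgt !mnmBE !mnm1E !eqxx ?e01 ?e02 ?e10 ?e12 ?e20 ?e21 /=.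
  by move: (m i0) (m i1) (m i2) => a b c; apply: ar1.
- rewrite (add2 (ifnn _ _ p0) (ifnn _ _ d2)) !ifne ep0 ed2.
  rewrite /tgt /dtgt !mnmBE !mnm1E !eqxx ?e01 ?e02 ?e10 ?e12 ?e20 ?e21 /=.
  by move: (m i0) (m i1) (m i2) => a b c; apply: ar2.
Qed.

Definition phi (p : Pol3) : RF := toRF (sq_subst p).
Lemma toRFM p q : toRF (p * q) = toRF p * toRF q.
Proof. by rewrite /toRF rmorphM. Qed.
Lemma toRFX p k : toRF (p ^+ k) = toRF p ^+ k.
Proof. by rewrite /toRF rmorphXn. Qed.
Lemma phiM p q : phi (p * q) = phi p * phi q.
Proof. by rewrite /phi /sq_subst /toRF !rmorphM. Qed.
Lemma phiD p q : phi (p + q) = phi p + phi q.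
Proof. by rewrite /phi /sq_subst /toRF !rmorphD. Qed.
Lemma phiX p k : phi (p ^+ k) = phi p ^+ k.
Proof. by rewrite /phi /sq_subst /toRF !rmorphXn. Qed.
Lemma phi1 : phi 1 = 1.
Proof. by rewrite /phi /sq_subst /toRF !rmorph1. Qed.
Lemma phiU : phi U = xF ^+ 2.
Proof. by rewrite /phi /sq_subst /U comp_mpolyXU /= /toRF rmorphXn. Qed.
Lemma phiV : phi V = yF ^+ 2.
Proof. by rewrite /phi /sq_subst /V comp_mpolyXU /= /toRF rmorphXn. Qed.
Lemma phiW : phi W = zF ^+ 2.
Proof. by rewrite /phi /sq_subst /W comp_mpolyXU /= /toRF rmorphXn. Qed.

Lemma XF_neq0 (i : 'I_3) : toRF 'X_i != 0.
Proof.
rewrite /toRF tofrac_eq0; apply/eqP => h.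
by move: (@mcoeffXU 3 rat i i); rewrite h mcoeff0 eqxx.
Qed.
Lemma xF_neq0 : xF != 0. Proof. exact: XF_neq0. Qed.
Lemma yF_neq0 : yF != 0. Proof. exact: XF_neq0. Qed.
Lemma zF_neq0 : zF != 0. Proof. exact: XF_neq0. Qed.

Lemma phi_neq0 p : p != 0 -> phi p != 0.
Proof.
move=> hp; apply: contra hp; rewrite /phi /toRF tofrac_eq0 => /eqP h.
by apply/eqP/mpolyP => m; rewrite -sq_coef h mcoeff0 mcoeff0.
Qed.

Lemma Pk_neq0 k : Pk k != 0.
Proof.
have [_ _ e _] := supp k (mono3 0 k 0).
apply/eqP => h; move: e; rewrite h mcoeff0 eqxx /tgt.
have -> : (mono3 0 k 0) i0 = 0%N by [].
have -> : (mono3 0 k 0) i1 = k by [].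
have -> : (mono3 0 k 0) i2 = 0%N by [].
by rewrite add0n addn0 eqxx.
Qed.

Lemma base1 (F : fieldType) (x y z : F) : z != 0 ->
  (x ^+ 2 + y ^+ 2) / z * (y * z) = y * (x ^+ 2 + y ^+ 2).
Proof. by move=> zn; field. Qed.
Lemma step (F : fieldType) (x y z a b S0 S1 : F) :
  y != 0 -> z != 0 -> a != 0 -> b != 0 -> S0 != 0 ->
  (x ^+ 2 + (y * S1 / ((y * a) * (z * b))) ^+ 2) / (y * S0 / (a * b)) *
    ((y * (y * a)) * (z * (z * b))) =
  y * ((S1 ^+ 2 + x ^+ 2 * a ^+ 2 * (z * b) ^+ 2) / S0).
Proof. move=> yn zn an bn sn; field. by rewrite sn bn an yn zn. Qed.

Lemma fin (F : fieldType) (y z s a b : F) : z != 0 -> a != 0 -> b != 0 ->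
  y * s = s / (a * (z * b)) * (y * a * (z * b)).
Proof. move=> zn an bn; field. by rewrite bn zn an. Qed.

Lemma Mrec (M : nat -> nat -> RF) (HM : is_markov_family M) k :
  M 1%N k.+2 = (xF ^+ 2 + M 1%N k.+1 ^+ 2) / M 1%N k.
Proof.
case: HM => _ H01 _ H.
have h := H 1%N k 0%N 1%N.
rewrite (_ : (k + 2 * 1)%N = k.+2) in h; last by rewrite muln1 addn2.
rewrite (_ : (k + 1)%N = k.+1) in h; last by rewrite addn1.
rewrite H01 in h; apply: h.
- by rewrite /valid_idx; case: k => [|k] //=; rewrite coprime1n.
- by [].
- by rewrite muln0.
- by [].
Qed.

Lemma cassini_phi k :
  phi (Pk k.+2) * phi (Pk k) =
  phi (Pk k.+1) ^+ 2 + xF ^+ 2 * (yF ^+ k) ^+ 2 * (zF ^+ k.+1) ^+ 2.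
Proof.
rewrite -phiM cassini phiD !phiM !phiX phiU phiV phiW -!exprM.
by rewrite [(2 * k)%N]mulnC [(2 * k.+1)%N]mulnC.
Qed.

Lemma inv (M : nat -> nat -> RF) (HM : is_markov_family M) k :
  M 1%N k * (yF ^+ k * zF ^+ k) = yF * phi (Pk k).
Proof.
suff: forall k, M 1%N k * (yF ^+ k * zF ^+ k) = yF * phi (Pk k) /\
   M 1%N k.+1 * (yF ^+ k.+1 * zF ^+ k.+1) = yF * phi (Pk k.+1) by move=> h; case: (h k).
have [H0 H1 H11 _] := HM.
have yn := yF_neq0; have zn := zF_neq0.
clear k; elim => [|k [h0 h1]].
  rewrite H0 H11 PkS !Pk0 Dk0 mulr1 mulr0 addr0 phiD phiU phiV phi1.
  split; first by rewrite !expr0 !mulr1.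
  by rewrite !expr1 base1.
split => //.
rewrite Mrec //.
have ykz : yF ^+ k * zF ^+ k != 0 := mulf_neq0 (expf_neq0 _ yn) (expf_neq0 _ zn).
have yk1z : yF ^+ k.+1 * zF ^+ k.+1 != 0 := mulf_neq0 (expf_neq0 _ yn) (expf_neq0 _ zn).
have eA : M 1%N k = yF * phi (Pk k) / (yF ^+ k * zF ^+ k) by rewrite -h0 (mulfK ykz).
have eB : M 1%N k.+1 = yF * phi (Pk k.+1) / (yF ^+ k.+1 * zF ^+ k.+1) by rewrite -h1 (mulfK yk1z).
have S0n : phi (Pk k) != 0 by apply: phi_neq0; exact: Pk_neq0.
have eS2 : phi (Pk k.+2) = (phi (Pk k.+1) ^+ 2 + xF ^+ 2 * (yF ^+ k) ^+ 2 * (zF ^+ k.+1) ^+ 2) / phi (Pk k).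
  by rewrite -cassini_phi (mulfK S0n).
rewrite eA eB eS2 !(exprS yF) !(exprS zF).
exact: (step _ _ _ _ _ _ _ _ yn zn (expf_neq0 _ yn) (expf_neq0 _ zn) S0n).
Qed.

Lemma tgt_iff n m : (1 <= n)%N ->
  tgt n m <-> exists i j : nat,
      [/\ (i + j <= n)%N, (n <= n * i + j)%N & m = mono3 i j (n - i - j)].
Proof.
move=> hn; rewrite /tgt; split.
  move=> /andP [/eqP hs hor]; exists (m i0), (m i1); split.
  - lia.
  - case/orP: hor => h; last by rewrite (eqP h) leq_addl.
    apply: leq_trans (leq_addr _ _); rewrite -{1}[n]muln1 leq_mul2l; lia.
  - apply/eqP; rewrite mnm3E.
    have -> : (mono3 (m i0) (m i1) (n - m i0 - m i1)) i0 = m i0 by [].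
    have -> : (mono3 (m i0) (m i1) (n - m i0 - m i1)) i1 = m i1 by [].
    have -> : (mono3 (m i0) (m i1) (n - m i0 - m i1)) i2 = (n - m i0 - m i1)%N by [].
    apply/and3P; split => //; apply/eqP; lia.
move=> [i [j [h1 h2 ->]]].
have -> : (mono3 i j (n - i - j)) i0 = i by [].
have -> : (mono3 i j (n - i - j)) i1 = j by [].
have -> : (mono3 i j (n - i - j)) i2 = (n - i - j)%N by [].
case: i h1 h2 => [|i] h1 h2.
  rewrite muln0 add0n in h2; apply/andP; split; first (apply/eqP; lia).
  apply/orP; right; apply/eqP; lia.
apply/andP; split; first (apply/eqP; lia).
by [].
Qed.

Theorem corollary5p3 (M : nat -> nat -> RF) (HM : is_markov_family M)
    (n : nat) (Hn : (1 <= n)%N) (P : Pol3)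
    (HP : M 1%N n = toRF (sq_subst P)
                    / toRF (('X_i1 : Pol3) ^+ n.-1 * ('X_i2 : Pol3) ^+ n)) :
  forall m : 'X_{1..3},
    P@_m != 0 <->
    exists i j : nat,
      [/\ (i + j <= n)%N, (n <= n * i + j)%N & m = mono3 i j (n - i - j)].
Proof.
move=> m.
have eP : P = Pk n.
  have h := @inv M HM n.
  rewrite HP in h.
  case: n Hn HP h => [|n'] Hn _ h; first by [].
  rewrite /= toRFM !toRFX -/yF -/zF in h.
  have yn := yF_neq0; have zn := zF_neq0.
  have e : yF * toRF (sq_subst P) = yF * phi (Pk n'.+1).
    rewrite -h !exprS.
    move: (toRF (sq_subst P)) (yF ^+ n') (zF ^+ n') (expf_neq0 n' yn) (expf_neq0 n' zn)
      => s a b an bn.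
    exact: (fin _ _ _ _ _ _ zn an bn).
  move/(mulfI yn): e; rewrite /phi /toRF => /eqP; rewrite tofrac_eq => /eqP e.
  by apply/mpolyP => m'; rewrite -[P@_m']sq_coef -[(Pk _)@_m']sq_coef e.
rewrite eP; have [_ _ -> _] := supp n m.
exact: tgt_iff.
Qed.
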